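(* Let $M$ be an oriented Legendrian knot mosaic representing a Legendrian knot $\Lambda$. Let $U$ and $D$ be the numbers of upward- and downward-oriented cusps in the diagram depicted by $M$, let $N$ be the number of negative crossings, and let $|M|_{T_5}$ and $|M|_{T_6}$ be the numbers of tiles of $M$ equal to $T_5$ and $T_6$ respectively. If $U\ge D$, then $$2|\operatorname{rot}(\Lambda)|\le 2N+|M|_{T_5}+|M|_{T_6}.$$
   Context: Legendrian knots are taken in the standard contact structure on $\mathbb{R}^3$ and represented by front ($xz$-) projections, which have cusps in place of vertical tangencies and in which the strand of more negative slope is the overstrand at every crossing. For an oriented front diagram with $D$ downward-oriented cusps (cusps traversed moving downward) and $U$ upward-oriented cusps, $\operatorname{rot}=\frac12(D-U)$. Legendrian mosaic tiles: take a square tile whose four edge midpoints are potential connection points. The tiles are $T_0$ (empty); $T_1,T_2,T_3,T_4$ (a single arc joining the midpoints of two adjacent edges, one tile for each of the four pairs of adjacent edges); $T_5,T_6$ (a single straight segment joining the midpoints of two opposite edges, one for each pair); $T_7,T_8$ (two disjoint arcs, each joining midpoints of two adjacent edges, together using all four midpoints); $T_{10}$ (two segments joining opposite edges and crossing once). A Legendrian $n$-mosaic is an $n\times n$ array of these tiles, with the whole array rotated $45^\circ$ counterclockwise so that the strands form a front diagram: after rotation the arc of $T_2$, the arc of $T_4$ and both arcs of $T_8$ each contain a cusp, the arcs of $T_1,T_3,T_7$ contain no cusp, $T_5,T_6$ are straight segments of slope $\pm1$, and in $T_{10}$ the strand of negative slope passes over. The mosaic is suitably connected if connection points agree across every shared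 edge and no connection point lies on the outer boundary; it then depicts a Legendrian link front. An oriented Legendrian knot mosaic is a suitably connected Legendrian mosaic depicting a knot, together with an orientation of that knot. *)

(* Defs.v *)
From HB Require Import structures.
From mathcomp Require Import all_boot all_order all_algebra.
Set Implicit Arguments. Unset Strict Implicit. Unset Printing Implicit Defensive.
Import Order.TTheory GRing.Theory Num.Theory.

(* Edge midpoints of an (unrotated) tile: North, East, South, West.
   After the 45-degree counterclockwise rotation: N = upper-left,
   E = upper-right, S = lower-right, W = lower-left. *)
Inductive dir := DN | DE | DS | DW.

Definition dir_code (d : dir) : nat :=
  match d with DN => 0 | DE => 1 | DS => 2 | DW => 3 end.
Definition dir_eqb (a b : dir) : bool := dir_code a == dir_code b.
Lemma dir_eqP : Equality.axiom dir_eqb.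
Proof. by move=> x y; apply: (iffP idP); [case: x; case: y | move=> ->; case: y]. Qed.
HB.instance Definition _ := hasDecEq.Build dir dir_eqP.

(* Legendrian mosaic tiles (T9 is not a Legendrian tile).
   T1: W-S, T2: E-S, T3: N-E, T4: N-W (arcs), T5: W-E, T6: N-S (segments),
   T7: W-S and N-E, T8: E-S and N-W, T10: N-S and W-E crossing with the
   N-S strand (slope -1 after rotation) over. *)
Inductive tile := T0 | T1 | T2 | T3 | T4 | T5 | T6 | T7 | T8 | T10.

Definition tile_code (t : tile) : nat :=
  match t with T0 => 0 | T1 => 1 | T2 => 2 | T3 => 3 | T4 => 4 | T5 => 5
  | T6 => 6 | T7 => 7 | T8 => 8 | T10 => 10 end.
Definition tile_eqb (a b : tile) : bool := tile_code a == tile_code b.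
Lemma tile_eqP : Equality.axiom tile_eqb.
Proof. by move=> x y; apply: (iffP idP); [case: x; case: y | move=> ->; case: y]. Qed.
HB.instance Definition _ := hasDecEq.Build tile tile_eqP.

Definition pieces (t : tile) : seq (dir * dir) :=
  match t with
  | T0 => [::]
  | T1 => [:: (DW, DS)]
  | T2 => [:: (DE, DS)]
  | T3 => [:: (DN, DE)]
  | T4 => [:: (DN, DW)]
  | T5 => [:: (DW, DE)]
  | T6 => [:: (DN, DS)]
  | T7 => [:: (DW, DS); (DN, DE)]
  | T8 => [:: (DE, DS); (DN, DW)]
  | T10 => [:: (DN, DS); (DW, DE)]
  end.

Definition has_conn (t : tile) (d : dir) : bool :=
  has (fun p => (p.1 == d) || (p.2 == d)) (pieces t).

Definition opp (d : dir) : dir :=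
  match d with DN => DS | DS => DN | DE => DW | DW => DE end.

(* A mosaic: M i j is the tile in row i (row 0 on top) and column j
   (column 0 on the left), before the 45-degree rotation. *)
Definition mosaic (n : nat) := 'I_n -> 'I_n -> tile.

Definition suitably_connected (n : nat) (M : mosaic n) : Prop :=
  (forall i i' j : 'I_n, val i' = (val i).+1 ->
      has_conn (M i j) DS = has_conn (M i' j) DN) /\
  (forall i j j' : 'I_n, val j' = (val j).+1 ->
      has_conn (M i j) DE = has_conn (M i j') DW) /\
  (forall i j : 'I_n, val i = 0 -> ~~ has_conn (M i j) DN) /\
  (forall i j : 'I_n, val i = n.-1 -> ~~ has_conn (M i j) DS) /\
  (forall i j : 'I_n, val j = 0 -> ~~ has_conn (M i j) DW) /\
  (forall i j : 'I_n, val j = n.-1 -> ~~ has_conn (M i j) DE).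

(* A traversal step: a cell, the edge through which the strand enters the
   cell and the edge through which it leaves. *)
Definition step (n : nat) := (('I_n * 'I_n) * (dir * dir))%type.

Definition adjacent (n : nat) (c c' : 'I_n * 'I_n) (d : dir) : bool :=
  match d with
  | DN => ((val c'.1).+1 == val c.1) && (val c'.2 == val c.2)
  | DS => (val c'.1 == (val c.1).+1) && (val c'.2 == val c.2)
  | DE => (val c'.1 == val c.1) && (val c'.2 == (val c.2).+1)
  | DW => (val c'.1 == val c.1) && ((val c'.2).+1 == val c.2)
  end.

Definition follows (n : nat) (x y : step n) : bool :=
  adjacent x.1 y.1 x.2.2 && (y.2.1 == opp x.2.2).

Definition same_piece (p q : dir * dir) : bool :=
  (p == q) || (p == (q.2, q.1)).

(* This encodes that the depicted link has a
   single component (is a knot) and fixes an orientation of it. *)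
Definition oriented_knot_mosaic (n : nat) (M : mosaic n) (s : seq (step n)) : Prop :=
  [/\ suitably_connected M,
      0 < size s,
      cycle (@follows n) s,
      (forall x, x \in s -> has (same_piece x.2) (pieces (M x.1.1 x.1.2))) &
      (forall (c : 'I_n * 'I_n) p, p \in pieces (M c.1 c.2) ->
          count (fun x : step n => (x.1 == c) && same_piece x.2 p) s = 1)].

(* Downward-oriented cusps: the cusp arcs N-W (right cusp) and E-S (left
   cusp) traversed from the upper to the lower endpoint. *)
Definition down_cusps (n : nat) (s : seq (step n)) : nat :=
  count (fun x : step n => (x.2 == (DN, DW)) || (x.2 == (DE, DS))) s.
Definition up_cusps (n : nat) (s : seq (step n)) : nat :=
  count (fun x : step n => (x.2 == (DW, DN)) || (x.2 == (DS, DE))) s.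

Definition rotation_number (n : nat) (s : seq (step n)) : rat :=
  ((down_cusps s)%:R - (up_cusps s)%:R) / 2.

(* Negative crossings (right-hand rule in the xz-plane, x to the right,
   z upward): at a T10 tile the over strand is N-S, the under strand W-E;
   the crossing is negative iff over N->S with under E->W, or over S->N
   with under W->E. *)
Definition neg_crossing (n : nat) (M : mosaic n) (s : seq (step n))
    (c : 'I_n * 'I_n) : bool :=
  (M c.1 c.2 == T10) &&
  ((((c, (DN, DS)) \in s) && ((c, (DE, DW)) \in s)) ||
   (((c, (DS, DN)) \in s) && ((c, (DW, DE)) \in s))).

Definition num_neg_crossings (n : nat) (M : mosaic n) (s : seq (step n)) : nat :=
  #|[set c : 'I_n * 'I_n | neg_crossing M s c]|.

Definition tile_count (n : nat) (M : mosaic n) (t : tile) : nat :=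
  #|[set c : 'I_n * 'I_n | M c.1 c.2 == t]|.

(* Main.v *)
Require Import Defs.
From HB Require Import structures.
From mathcomp Require Import all_boot all_order all_algebra.
From mathcomp Require Import zify ring lra.
Import Order.TTheory GRing.Theory Num.Theory.
Local Open Scope ring_scope.

Definition ind (b : bool) : int := (b : nat)%:Z.

Lemma path_sum (T : Type) (r : rel T) (G H : T -> int) :
  (forall x y, r x y -> G y = H x) ->
  forall x0 p, path r x0 p -> \sum_(y <- p) G y = \sum_(x <- belast x0 p) H x.
Proof.
move=> hr x0 p; elim: p x0 => [|y p IH] x0 /=; first by rewrite !big_nil.
by case/andP=> h1 h2; rewrite !big_cons (IH _ h2) (hr _ _ h1).
Qed.

Lemma cycle_sum (T : eqType) (r : rel T) (G H : T -> int) (s : seq T) :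
  cycle r s -> (forall x y, r x y -> G y = H x) ->
  \sum_(x <- s) G x = \sum_(x <- s) H x.
Proof.
case: s => [|x s] hc hr; first by rewrite !big_nil.
have := @path_sum _ _ _ _ hr x (rcons s x) hc; rewrite belast_rcons => <-.
by apply: perm_big; rewrite perm_sym perm_rcons.
Qed.

Lemma sum_count (T : Type) (s : seq T) (A B : pred T) :
  \sum_(x <- s | A x) ind (B x) = (count (fun x => A x && B x) s)%:Z.
Proof.
elim: s => [|y s IH]; first by rewrite big_nil.
rewrite big_cons /= IH; case: (A y); case: (B y) => //=.
Qed.

Section Aux.
Variable n : nat.
Implicit Types (s : seq (step n)) (x : step n).


Definition ex (d : dir) x : int := ind (x.2.2 == d).
Definition fZ (d : dir) : int := ind ((d == DE) || (d == DN)).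
Definition upb x := (x.2 == (DW, DN)) || (x.2 == (DS, DE)).
Definition dnb x := (x.2 == (DN, DW)) || (x.2 == (DE, DS)).
Definition strZ x : int :=
  ind (x.2 == (DN, DS)) - ind (x.2 == (DS, DN)) + ind (x.2 == (DE, DW))
  - ind (x.2 == (DW, DE)).

Lemma pointwise x :
  ind (upb x) - ind (dnb x) =
  strZ x + (ex DN x - ex DS x) + (ex DE x - ex DW x) - (fZ x.2.2 - fZ (Defs.opp x.2.1)).
Proof. by case: x => c [a b]; case: a; case: b. Qed.

Lemma ns_zero s : cycle (@follows n) s -> \sum_(x <- s) (ex DN x - ex DS x) = 0.
Proof.
move=> hc.
have := @cycle_sum _ _ (fun y => (val y.1.1)%:Z)
  (fun x => (val x.1.1)%:Z - (ex DN x - ex DS x)) s hc.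
rewrite sumrB => h; (suff: \sum_(x <- s) (val x.1.1)%:Z = \sum_(x <- s) (val x.1.1)%:Z - \sum_(x <- s) (ex DN x - ex DS x) by lia); apply: h.
move=> [[i j] [a b]] [[i' j'] [a' b']]; rewrite /follows /=.
by case: b => /= /andP [/andP [/eqP h1 /eqP h2] _]; rewrite /ex /ind /=; lia.
Qed.

Lemma ew_zero s : cycle (@follows n) s -> \sum_(x <- s) (ex DE x - ex DW x) = 0.
Proof.
move=> hc.
have := @cycle_sum _ _ (fun y => (val y.1.2)%:Z)
  (fun x => (val x.1.2)%:Z + (ex DE x - ex DW x)) s hc.
rewrite big_split /= => h; (suff: \sum_(x <- s) (val x.1.2)%:Z = \sum_(x <- s) (val x.1.2)%:Z + \sum_(x <- s) (ex DE x - ex DW x) by move=> hh; apply: (@addrI _ (\sum_(x <- s) (val x.1.2)%:Z)); rewrite addr0 -hh); apply: h.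
move=> [[i j] [a b]] [[i' j'] [a' b']]; rewrite /follows /=.
by case: b => /= /andP [/andP [/eqP h1 /eqP h2] _]; rewrite /ex /ind /=; lia.
Qed.

Lemma f_zero s : cycle (@follows n) s ->
  \sum_(x <- s) (fZ x.2.2 - fZ (Defs.opp x.2.1)) = 0.
Proof.
move=> hc.
have := @cycle_sum _ _ (fun y => fZ (Defs.opp y.2.1)) (fun x => fZ x.2.2) s hc.
rewrite sumrB => h; rewrite -h ?subrr //.
move=> [[i j] [a b]] [[i' j'] [a' b']]; rewrite /follows /=.
by case/andP=> _ /eqP ->; case: b.
Qed.

Definition cnt (c : 'I_n * 'I_n) (p : dir * dir) s :=
  count (fun x : step n => (x.1 == c) && (x.2 == p)) s.

Lemma part s (F : step n -> int) :
  \sum_(x <- s) F x = \sum_(c : 'I_n * 'I_n) \sum_(x <- s | x.1 == c) F x.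
Proof.
transitivity (\sum_(x <- s) \sum_(c : 'I_n * 'I_n) (if x.1 == c then F x else 0)).
  apply: eq_bigr => x _; rewrite -big_mkcond (big_pred1 x.1) //.
rewrite exchange_big; apply: eq_bigr => c _; by rewrite [RHS]big_mkcond.
Qed.

Lemma str_cell s c : \sum_(x <- s | x.1 == c) strZ x =
  (cnt c (DN,DS) s)%:Z - (cnt c (DS,DN) s)%:Z + (cnt c (DE,DW) s)%:Z
  - (cnt c (DW,DE) s)%:Z.
Proof. by rewrite /strZ sumrB big_split sumrB /= !sum_count. Qed.

Lemma split_count s (A B C : pred (step n)) :
  (forall x, B x -> C x -> false) ->
  count (fun x => A x && (B x || C x)) s =
  (count (fun x => A x && B x) s + count (fun x => A x && C x) s)%N.
Proof.
move=> hd; elim: s => [|y s IH] //=; rewrite IH.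
case: (A y); case By: (B y); case Cy: (C y) => //=; last lia.
by have := hd y By Cy.
Qed.

Lemma cell_zero (M : mosaic n) s c p :
  (forall x, x \in s -> has (same_piece x.2) (pieces (M x.1.1 x.1.2))) ->
  ~~ has (same_piece p) (pieces (M c.1 c.2)) -> cnt c p s = 0%N.
Proof.
move=> h4 hn; apply/eqP; rewrite -leqn0 leqNgt -has_count; apply/hasPn => x xs.
apply/negP => /andP [/eqP e1 /eqP e2].
by move: (h4 x xs); rewrite e1 e2 (negbTE hn).
Qed.

Lemma mem_cnt s c p : ((c, p) \in s) = (0 < cnt c p s)%N.
Proof.
rewrite -has_pred1 has_count; congr (0 < _)%N; apply: eq_count => x /=.
Qed.

Lemma cell_bound (M : mosaic n) s c :
  (forall x, x \in s -> has (same_piece x.2) (pieces (M x.1.1 x.1.2))) ->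
  (forall (c : 'I_n * 'I_n) p, p \in pieces (M c.1 c.2) ->
      count (fun x : step n => (x.1 == c) && same_piece x.2 p) s = 1%N) ->
  (cnt c (DN,DS) s)%:Z - (cnt c (DS,DN) s)%:Z + (cnt c (DE,DW) s)%:Z
  - (cnt c (DW,DE) s)%:Z <=
  ((neg_crossing M s c + neg_crossing M s c + (M c.1 c.2 == T5)
    + (M c.1 c.2 == T6))%N)%:Z.
Proof.
move=> h4 h5.
have f1 : (DN,DS) \in pieces (M c.1 c.2) -> (cnt c (DN,DS) s + cnt c (DS,DN) s)%N = 1%N.
  move=> hp; rewrite -(h5 c _ hp) /same_piece /= -split_count //.
  by move=> x /eqP ->.
have f4 : (DW,DE) \in pieces (M c.1 c.2) -> (cnt c (DW,DE) s + cnt c (DE,DW) s)%N = 1%N.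
  move=> hp; rewrite -(h5 c _ hp) /same_piece /= -split_count //.
  by move=> x /eqP ->.
have f2 := @cell_zero M s c (DN,DS) h4.
have f3 := @cell_zero M s c (DS,DN) h4.
have f5 := @cell_zero M s c (DE,DW) h4.
have f6 := @cell_zero M s c (DW,DE) h4.
rewrite /neg_crossing !mem_cnt.
move: f1 f2 f3 f4 f5 f6.
move: (cnt c (DN,DS) s) (cnt c (DS,DN) s) (cnt c (DE,DW) s) (cnt c (DW,DE) s) => a b d e.
case: (M c.1 c.2) => /= f1 f2 f3 f4 f5 f6;
  try (have g1 := f1 isT); try (have g2 := f2 isT); try (have g3 := f3 isT);
  try (have g4 := f4 isT); try (have g5 := f5 isT); try (have g6 := f6 isT);
  clear f1 f2 f3 f4 f5 f6; lia.
Qed.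

End Aux.

Lemma card_sum (T : finType) (P : pred T) : #|[set c | P c]| = (\sum_c (P c : nat))%N.
Proof. by rewrite -sum1dep_card big_mkcond; apply: eq_bigr => c _; case: (P c). Qed.

Lemma key (n : nat) (M : mosaic n) (s : seq (step n)) :
  oriented_knot_mosaic M s ->
  (up_cusps s)%:Z - (down_cusps s)%:Z <=
   ((2 * num_neg_crossings M s + tile_count M T5 + tile_count M T6)%N)%:Z.
Proof.
case=> _ _ hc h4 h5.
have E1 : (up_cusps s)%:Z - (down_cusps s)%:Z =
    \sum_(x <- s) (ind (@upb n x) - ind (@dnb n x)).
  by rewrite sumrB !sum_count.
rewrite E1 (eq_bigr _ (fun x _ => @pointwise n x)) sumrB big_split big_split.
rewrite ns_zero // ew_zero // f_zero // /= ?oppr0 ?addr0 ?subr0 part.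
under eq_bigr do rewrite str_cell.
apply: (le_trans (ler_sum _ (fun c _ => @cell_bound n M s c h4 h5))).
rewrite -(big_morph Posz PoszD (erefl _)).
rewrite /num_neg_crossings /tile_count !card_sum !big_split /=.
rewrite lez_nat; lia.
Qed.

Theorem lemma2p2 (n : nat) (M : mosaic n) (s : seq (step n)) :
  oriented_knot_mosaic M s ->
  (down_cusps s <= up_cusps s)%N ->
  2 * `|rotation_number s| <=
    ((2 * num_neg_crossings M s + tile_count M T5 + tile_count M T6)%N)%:R.
Proof.
move=> hk hDU.
have hz := @key n M s hk.
have hn : (up_cusps s <= down_cusps s + (2 * num_neg_crossings M s + tile_count M T5 + tile_count M T6))%N by lia.
have hr : 2 * rotation_number s = (down_cusps s)%:R - (up_cusps s)%:R.
  by rewrite /rotation_number mulrC divfK // (eqr_nat rat 2 0).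
move: hn; rewrite -(ler_nat rat) natrD => hn.
have hDU' : (down_cusps s)%:R <= (up_cusps s)%:R :> rat by rewrite ler_nat.
rewrite ler0_norm; last lra.
lra.
Qed.
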